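(* Let $\widetilde V:[-1,1]\to\mathbb R$ be smooth and $V(\vec n)=\widetilde V(\vec n\cdot e_z)$ on $S^2$. Let $\vec n:[0,T]\to S^2$ be a smooth solution of $$D_t^3\dot{\vec n}+R(D_t\dot{\vec n},\dot{\vec n})\dot{\vec n}+\operatorname{grad}V(\vec n)=0 .$$ Then the quantity $$J_z(t)=\Big\langle \tfrac{d}{dt}\big(D_t\dot{\vec n}(t)\big),X(\vec n(t))\Big\rangle-\Big\langle D_t\dot{\vec n}(t),D_tX(\vec n(t))\Big\rangle$$ is constant in $t$.
   Context: $S^2\subset\mathbb R^3$ is the unit sphere with the round metric $\langle\cdot,\cdot\rangle$ (restriction of the Euclidean inner product), Levi--Civita connection $\nabla$, covariant derivative $D_t$ along curves, and $D_t^3\dot{\vec n}=D_t(D_t(D_t\dot{\vec n}))$. Its curvature tensor is $R(a,b)c=(b\cdot c)a-(a\cdot c)b$ for tangent vectors $a,b,c$. $\operatorname{grad}V$ is the Riemannian gradient of $V$ (equivalently the tangential projection of the Euclidean gradient of any smooth extension). $e_z=(0,0,1)$, $X(\vec n)=e_z\times\vec n$ is the Killing vector field generating rotations about the $z$-axis, and $D_tX(\vec n(t))=\nabla_{\dot{\vec n}}X$. In $J_z$, $\tfrac{d}{dt}(D_t\dot{\vec n})$ is the ordinary derivative in $\mathbb R^3$ of the vector $D_t\dot{\vec n}(t)\in\mathbb R^3$. *)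

(* Defs.v *)
From Stdlib Require Import Reals.
From Coquelicot Require Import Coquelicot.
Open Scope R_scope.

Record R3 := mkR3 { cx : R ; cy : R ; cz : R }.

Definition vadd (a b : R3) : R3 := mkR3 (cx a + cx b) (cy a + cy b) (cz a + cz b).
Definition vscal (r : R) (a : R3) : R3 := mkR3 (r * cx a) (r * cy a) (r * cz a).
Definition vsub (a b : R3) : R3 := vadd a (vscal (-1) b).
Definition dot (a b : R3) : R := cx a * cx b + cy a * cy b + cz a * cz b.
Definition cross (a b : R3) : R3 :=
  mkR3 (cy a * cz b - cz a * cy b) (cz a * cx b - cx a * cz b) (cx a * cy b - cy a * cx b).
Definition e_x : R3 := mkR3 1 0 0.
Definition e_y : R3 := mkR3 0 1 0.
Definition e_z : R3 := mkR3 0 0 1.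

Definition on_S2 (p : R3) : Prop := dot p p = 1.

Definition tproj (p v : R3) : R3 := vsub v (vscal (dot v p) p).

Definition vderive (Y : R -> R3) (t : R) : R3 :=
  mkR3 (Derive (fun s => cx (Y s)) t) (Derive (fun s => cy (Y s)) t)
       (Derive (fun s => cz (Y s)) t).

Definition smooth_curve (Y : R -> R3) : Prop :=
  forall (k : nat) (t : R),
    ex_derive_n (fun s => cx (Y s)) k t /\
    ex_derive_n (fun s => cy (Y s)) k t /\
    ex_derive_n (fun s => cz (Y s)) k t.

Definition smooth_fun (f : R -> R) : Prop := forall (k : nat) (x : R), ex_derive_n f k x.

(** Levi-Civita covariant derivative along the curve n on the round S^2
    (induced metric): D_t Y = tangential projection of dY/dt. *)
Definition Dt (n : R -> R3) (Y : R -> R3) : R -> R3 :=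
  fun t => tproj (n t) (vderive Y t).

Definition ndot (n : R -> R3) : R -> R3 := vderive n.

Definition Rcurv (a b c : R3) : R3 := vsub (vscal (dot b c) a) (vscal (dot a c) b).

Definition egrad (W : R3 -> R) (p : R3) : R3 :=
  mkR3 (Derive (fun s => W (vadd p (vscal s e_x))) 0)
       (Derive (fun s => W (vadd p (vscal s e_y))) 0)
       (Derive (fun s => W (vadd p (vscal s e_z))) 0).

(** Riemannian gradient on S^2 = tangential projection of the Euclidean
    gradient of a smooth extension W. *)
Definition gradS2 (W : R3 -> R) (p : R3) : R3 := tproj p (egrad W p).

(** The potential V(n) = Vt(n . e_z), extended to R^3 by the same formula. *)
Definition Vpot (Vt : R -> R) (p : R3) : R := Vt (dot p e_z).

(** Killing field generating rotations about the z-axis. *)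
Definition Xkill (p : R3) : R3 := cross e_z p.

Definition Jz (n : R -> R3) (t : R) : R :=
  dot (vderive (Dt n (ndot n)) t) (Xkill (n t))
  - dot (Dt n (ndot n) t) (Dt n (fun s => Xkill (n s)) t).

(* Main.v *)
Require Import Defs.
From Stdlib Require Import Reals Lra FunctionalExtensionality.
From Coquelicot Require Import Coquelicot.
Open Scope R_scope.

Lemma isd_mult (f g : R -> R) x a b :
  is_derive f x a -> is_derive g x b ->
  is_derive (fun t => f t * g t) x (a * g x + f x * b).
Proof. intros Hf Hg. exact (is_derive_mult f g x a b Hf Hg Rmult_comm). Qed.

Lemma isd_plus (f g : R -> R) x a b :
  is_derive f x a -> is_derive g x b ->
  is_derive (fun t => f t + g t) x (a + b).
Proof. intros Hf Hg. exact (is_derive_plus f g x a b Hf Hg). Qed.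

Lemma isd_minus (f g : R -> R) x a b :
  is_derive f x a -> is_derive g x b ->
  is_derive (fun t => f t - g t) x (a - b).
Proof. intros Hf Hg. exact (is_derive_minus f g x a b Hf Hg). Qed.

Lemma isd_const (c x : R) : is_derive (fun _ => c) x 0.
Proof. exact (is_derive_const c x). Qed.

Lemma isd_eq (f : R -> R) x a b : is_derive f x a -> a = b -> is_derive f x b.
Proof. intros H ->; exact H. Qed.

Definition hasvd (F : R -> R3) (t : R) (F' : R3) : Prop :=
  is_derive (fun s => cx (F s)) t (cx F') /\
  is_derive (fun s => cy (F s)) t (cy F') /\
  is_derive (fun s => cz (F s)) t (cz F').

Lemma vderive_hasvd F t F' : hasvd F t F' -> vderive F t = F'.
Proof.
  intros [H1 [H2 H3]]. unfold vderive. destruct F'; simpl in *.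
  f_equal; apply is_derive_unique; assumption.
Qed.

Lemma hasvd_add F G t F' G' : hasvd F t F' -> hasvd G t G' ->
  hasvd (fun s => vadd (F s) (G s)) t (vadd F' G').
Proof.
  intros [a1 [a2 a3]] [b1 [b2 b3]]; unfold vadd; simpl.
  split; [|split]; apply isd_plus; assumption.
Qed.

Lemma hasvd_scal (f : R -> R) F t f' F' : is_derive f t f' -> hasvd F t F' ->
  hasvd (fun s => vscal (f s) (F s)) t (vadd (vscal f' (F t)) (vscal (f t) F')).
Proof.
  intros Hf [b1 [b2 b3]]; unfold vadd, vscal; simpl.
  split; [|split]; apply isd_mult; assumption.
Qed.

Lemma hasvd_cscal (c : R) F t F' : hasvd F t F' ->
  hasvd (fun s => vscal c (F s)) t (vscal c F').
Proof.
  intros [b1 [b2 b3]]; unfold vscal; simpl.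
  split; [|split]; apply is_derive_scal; assumption.
Qed.

Lemma hasvd_sub F G t F' G' : hasvd F t F' -> hasvd G t G' ->
  hasvd (fun s => vsub (F s) (G s)) t (vsub F' G').
Proof.
  intros HF HG. unfold vsub. apply (hasvd_add F (fun s => vscal (-1) (G s))); auto.
  apply hasvd_cscal; auto.
Qed.

Lemma isd_dot F G t F' G' : hasvd F t F' -> hasvd G t G' ->
  is_derive (fun s => dot (F s) (G s)) t (dot F' (G t) + dot (F t) G').
Proof.
  intros [a1 [a2 a3]] [b1 [b2 b3]]; unfold dot.
  eapply isd_eq.
  { apply isd_plus; [apply isd_plus|]; apply isd_mult; eassumption. }
  simpl. ring.
Qed.

Lemma hasvd_Xkill F t F' : hasvd F t F' ->
  hasvd (fun s => Xkill (F s)) t (Xkill F').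
Proof.
  intros [a1 [a2 a3]]; unfold Xkill, cross, e_z; simpl.
  split; [|split].
  - apply isd_eq with (0 * cz F' - 1 * cy F').
    + apply isd_minus; apply is_derive_scal; assumption.
    + reflexivity.
  - apply isd_eq with (1 * cx F' - 0 * cz F').
    + apply isd_minus; apply is_derive_scal; assumption.
    + reflexivity.
  - apply isd_eq with (0 * cy F' - 0 * cx F').
    + apply isd_minus; apply is_derive_scal; assumption.
    + reflexivity.
Qed.

Definition tprojD (P P' V V' : R3) : R3 :=
  vsub V' (vadd (vscal (dot V' P + dot V P') P) (vscal (dot V P) P')).

Lemma hasvd_tproj P V t P' V' : hasvd P t P' -> hasvd V t V' ->
  hasvd (fun s => tproj (P s) (V s)) t (tprojD (P t) P' (V t) V').
Proof.
  intros HP HV. unfold tproj, tprojD.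
  apply hasvd_sub; auto.
  apply hasvd_scal; auto. apply isd_dot; auto.
Qed.

Ltac crush := repeat match goal with v : R3 |- _ => destruct v end;
  unfold tprojD, tproj, Rcurv, Xkill, cross, vsub, vadd, vscal, dot, e_z; simpl; ring.
Lemma L1 p a : dot (tproj p a) (Xkill p) = dot a (Xkill p).
Proof. crush. Qed.
Lemma L2 p v a b : dot (tprojD p v a b) (Xkill p) = dot b (Xkill p) - dot a p * dot v (Xkill p).
Proof. crush. Qed.
Lemma L3 p g : dot (tproj p (mkR3 0 0 g)) (Xkill p) = 0.
Proof. crush. Qed.
Lemma Ldadd a b c : dot (vadd a b) c = dot a c + dot b c.
Proof. crush. Qed.
Lemma L4 p a v : dot (Rcurv a v v) (Xkill p) = dot v v * dot a (Xkill p) - dot a v * dot v (Xkill p).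
Proof. crush. Qed.
Lemma L5 p v a : dot a (tproj p (Xkill v)) = dot a (Xkill v) - dot (Xkill v) p * dot a p.
Proof. crush. Qed.
Lemma L6 p v w : dot (tproj p w) (tprojD p v (Xkill v) (Xkill w)) =
  - dot w p * dot p (Xkill w) - dot w p * (1 - dot p p) * dot (Xkill w) p
  - dot (Xkill v) p * dot (tproj p w) v.
Proof. crush. Qed.
Lemma L7 p v : dot v (Xkill p) = - dot (Xkill v) p.
Proof. crush. Qed.
Lemma L8 p w : dot (tproj p w) (Xkill p) = - dot p (Xkill w).
Proof. crush. Qed.
Lemma dotC a b : dot a b = dot b a.
Proof. crush. Qed.
Lemma alg (p v w u A2 : R3) (g : R) :
  let A := tproj p w in let A1 := tprojD p v w u in
  let DX := tproj p (Xkill v) in let DX' := tprojD p v (Xkill v) (Xkill w) in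
  let Eq := vadd (vadd (tproj p (tprojD p v A1 A2)) (Rcurv A v v)) (tproj p (mkR3 0 0 g)) in
  dot A2 (Xkill p) + dot A1 (Xkill v) - (dot A1 DX + dot A DX') =
  dot Eq (Xkill p) + dot p (Xkill w) * (dot p w + dot v v)
   + dot (Xkill w) p * dot w p * (1 - dot p p).
Proof.
  intros. subst A DX DX' Eq.
  rewrite !Ldadd, L1, L2, L3, L4, L5, L6, L8, !(L7 p v), (dotC w p), (dotC (Xkill w) p). ring.
Qed.


Lemma alg' (p v w u A2 : R3) (g : R) :
  vadd (vadd (tproj p (tprojD p v (tprojD p v w u) A2)) (Rcurv (tproj p w) v v)) (tproj p (mkR3 0 0 g)) = mkR3 0 0 0 ->
  dot p p = 1 -> dot p w + dot v v = 0 ->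
  dot A2 (Xkill p) + dot (tprojD p v w u) (Xkill v) - (dot (tprojD p v w u) (tproj p (Xkill v)) + dot (tproj p w) (tprojD p v (Xkill v) (Xkill w))) = 0.
Proof.
  intros HE H0 H2. rewrite (alg p v w u A2 g). cbv zeta. rewrite HE, H0, H2.
  unfold dot; simpl; ring.
Qed.

Definition Nk (n : R -> R3) (k : nat) (t : R) : R3 :=
  mkR3 (Derive_n (fun s => cx (n s)) k t) (Derive_n (fun s => cy (n s)) k t)
       (Derive_n (fun s => cz (n s)) k t).

Lemma hasvd_Nk n k t : smooth_curve n -> hasvd (Nk n k) t (Nk n (S k) t).
Proof.
  intros H. destruct (H (S k) t) as [h1 [h2 h3]].
  split; [|split]; apply Derive_correct; assumption.
Qed.

Lemma n_N0 n t : n t = Nk n 0 t.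
Proof. unfold Nk; simpl. destruct (n t); reflexivity. Qed.

Lemma vderive_N n k t : vderive (Nk n k) t = Nk n (S k) t.
Proof. reflexivity. Qed.

Lemma ndot_N1 n : ndot n = Nk n 1.
Proof. apply functional_extensionality; intro t; reflexivity. Qed.

Lemma hasvd_vderive F t F' : hasvd F t F' -> hasvd F t (vderive F t).
Proof. intros H. rewrite (vderive_hasvd _ _ _ H). exact H. Qed.

Lemma locconst (f : R -> R) t l c T : 0 < t < T -> (forall s, 0 < s < T -> f s = c) ->
  is_derive f t l -> l = 0.
Proof.
  intros Ht Hc Hd.
  assert (Hl : locally t (fun s => 0 < s < T)).
  { apply (open_and (fun s => 0 < s) (fun s => s < T)); [apply open_gt | apply open_lt | exact Ht]. }
  assert (Hl2 : locally t (fun s => f s = c)).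
  { eapply filter_imp; [| exact Hl]. intros s Hs; apply Hc; exact Hs. }
  pose proof (is_derive_ext_loc f (fun _ => c) t l Hl2 Hd) as H2.
  pose proof (is_derive_unique _ _ _ H2) as H3.
  rewrite Derive_const in H3. symmetry; exact H3.
Qed.

Lemma egrad_V Vt p : egrad (Vpot Vt) p = mkR3 0 0 (cz (egrad (Vpot Vt) p)).
Proof.
  unfold egrad; simpl. f_equal.
  - rewrite (Derive_ext _ (fun _ => Vt (cz p))); [apply Derive_const|].
    intro s; unfold Vpot, dot, vadd, vscal, e_x, e_z; simpl. f_equal; ring.
  - rewrite (Derive_ext _ (fun _ => Vt (cz p))); [apply Derive_const|].
    intro s; unfold Vpot, dot, vadd, vscal, e_y, e_z; simpl. f_equal; ring.
Qed.

Lemma hasvd_tprojD P P' V V' t dP dP' dV dV' :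
  hasvd P t dP -> hasvd P' t dP' -> hasvd V t dV -> hasvd V' t dV' ->
  exists F, hasvd (fun s => tprojD (P s) (P' s) (V s) (V' s)) t F.
Proof.
  intros h1 h2 h3 h4. unfold tprojD. eexists.
  apply (hasvd_sub V' (fun s => vadd (vscal (dot (V' s) (P s) + dot (V s) (P' s)) (P s)) (vscal (dot (V s) (P s)) (P' s)))); [exact h4|].
  apply (hasvd_add (fun s => vscal (dot (V' s) (P s) + dot (V s) (P' s)) (P s)) (fun s => vscal (dot (V s) (P s)) (P' s))).
  - apply (hasvd_scal (fun s => dot (V' s) (P s) + dot (V s) (P' s)) P); [|exact h1].
    apply (isd_plus (fun s => dot (V' s) (P s)) (fun s => dot (V s) (P' s))); apply isd_dot; eassumption.
  - apply (hasvd_scal (fun s => dot (V s) (P s)) P'); [|exact h2].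
    apply isd_dot; eassumption.
Qed.

Ltac hv := repeat first
  [ apply hasvd_Nk; assumption
  | apply hasvd_sub | apply hasvd_add | apply hasvd_scal | apply isd_plus | apply isd_dot ].

Theorem mainTheorem7 (Vt : R -> R) (n : R -> R3) (T : R) :
  smooth_fun Vt ->
  smooth_curve n ->
  (forall t, 0 <= t <= T -> on_S2 (n t)) ->
  (forall t, 0 <= t <= T ->
     vadd (vadd (Dt n (Dt n (Dt n (ndot n))) t)
                (Rcurv (Dt n (ndot n) t) (ndot n t) (ndot n t)))
          (gradS2 (Vpot Vt) (n t)) = mkR3 0 0 0) ->
  forall s t, 0 <= s <= T -> 0 <= t <= T -> Jz n s = Jz n t.
Proof.
  intros _ Hsm HS2 Heq.
  assert (E_A : Dt n (ndot n) = fun t => tproj (Nk n 0 t) (Nk n 2 t)).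
  { apply functional_extensionality; intro t. unfold Dt.
    rewrite (n_N0 n t). f_equal. }
  set (A1 := fun t => tprojD (Nk n 0 t) (Nk n 1 t) (Nk n 2 t) (Nk n 3 t)).
  assert (E_A1 : vderive (Dt n (ndot n)) = A1).
  { apply functional_extensionality; intro t. rewrite E_A.
    apply vderive_hasvd. apply hasvd_tproj; apply hasvd_Nk; assumption. }
  assert (HA1 : forall t, hasvd A1 t (vderive A1 t)).
  { intro t. destruct (hasvd_tprojD (Nk n 0) (Nk n 1) (Nk n 2) (Nk n 3) t _ _ _ _
      (hasvd_Nk n 0 t Hsm) (hasvd_Nk n 1 t Hsm) (hasvd_Nk n 2 t Hsm) (hasvd_Nk n 3 t Hsm)) as [F HF].
    exact (hasvd_vderive _ _ _ HF). }
  assert (E_B : Dt n (Dt n (ndot n)) = fun t => tproj (Nk n 0 t) (A1 t)).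
  { apply functional_extensionality; intro t. unfold Dt at 1.
    rewrite E_A1, n_N0. reflexivity. }
  assert (E_C : forall t, Dt n (Dt n (Dt n (ndot n))) t =
            tproj (Nk n 0 t) (tprojD (Nk n 0 t) (Nk n 1 t) (A1 t) (vderive A1 t))).
  { intro t. change (Dt n (Dt n (Dt n (ndot n))) t) with
      (tproj (n t) (vderive (Dt n (Dt n (ndot n))) t)).
    rewrite n_N0. f_equal. rewrite E_B. apply vderive_hasvd.
    apply hasvd_tproj; [apply hasvd_Nk; assumption | apply HA1]. }
  assert (E_DX : Dt n (fun s => Xkill (n s)) = fun t => tproj (Nk n 0 t) (Xkill (Nk n 1 t))).
  { apply functional_extensionality; intro t. unfold Dt. rewrite n_N0. f_equal.
    apply vderive_hasvd.
    apply (hasvd_Xkill (fun s => n s) t (Nk n 1 t)).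
    assert (Hf : (fun s => n s) = Nk n 0).
    { apply functional_extensionality; intro s; apply n_N0. }
    rewrite Hf. apply hasvd_Nk; assumption. }
  assert (E_J : forall t, Jz n t = dot (A1 t) (Xkill (Nk n 0 t))
            - dot (tproj (Nk n 0 t) (Nk n 2 t)) (tproj (Nk n 0 t) (Xkill (Nk n 1 t)))).
  { intro t. unfold Jz. rewrite E_A1, E_DX, E_A, n_N0. reflexivity. }
  assert (DJ : forall t, is_derive (Jz n) t
     (dot (vderive A1 t) (Xkill (Nk n 0 t)) + dot (A1 t) (Xkill (Nk n 1 t)) -
      (dot (A1 t) (tproj (Nk n 0 t) (Xkill (Nk n 1 t))) +
       dot (tproj (Nk n 0 t) (Nk n 2 t)) (tprojD (Nk n 0 t) (Nk n 1 t) (Xkill (Nk n 1 t)) (Xkill (Nk n 2 t)))))).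
  { intro t. apply (is_derive_ext (fun t => dot (A1 t) (Xkill (Nk n 0 t))
            - dot (tproj (Nk n 0 t) (Nk n 2 t)) (tproj (Nk n 0 t) (Xkill (Nk n 1 t))))).
    { intro u; symmetry; apply E_J. }
    apply isd_minus; apply isd_dot.
    - apply HA1.
    - apply hasvd_Xkill; apply hasvd_Nk; assumption.
    - apply hasvd_tproj; apply hasvd_Nk; assumption.
    - apply hasvd_tproj; [apply hasvd_Nk; assumption|].
      apply hasvd_Xkill; apply hasvd_Nk; assumption. }
  assert (C0 : forall t, 0 <= t <= T -> dot (Nk n 0 t) (Nk n 0 t) = 1).
  { intros t Ht. pose proof (HS2 t Ht) as H. unfold on_S2 in H. rewrite n_N0 in H. exact H. }
  assert (C1 : forall t, 0 < t < T -> dot (Nk n 0 t) (Nk n 1 t) = 0).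
  { intros t Ht.
    assert (Hd : is_derive (fun s => dot (Nk n 0 s) (Nk n 0 s)) t (dot (Nk n 1 t) (Nk n 0 t) + dot (Nk n 0 t) (Nk n 1 t))).
    { apply isd_dot; apply hasvd_Nk; assumption. }
    pose proof (locconst _ t _ 1 T Ht (fun s Hs => C0 s (conj (Rlt_le _ _ (proj1 Hs)) (Rlt_le _ _ (proj2 Hs)))) Hd) as H.
    rewrite (dotC (Nk n 1 t)) in H. lra. }
  assert (C2 : forall t, 0 < t < T -> dot (Nk n 0 t) (Nk n 2 t) + dot (Nk n 1 t) (Nk n 1 t) = 0).
  { intros t Ht.
    assert (Hd : is_derive (fun s => dot (Nk n 0 s) (Nk n 1 s)) t (dot (Nk n 1 t) (Nk n 1 t) + dot (Nk n 0 t) (Nk n 2 t))).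
    { apply isd_dot; apply hasvd_Nk; assumption. }
    pose proof (locconst _ t _ 0 T Ht C1 Hd) as H. lra. }
  assert (DJ0 : forall t, 0 < t < T -> is_derive (Jz n) t 0).
  { intros t Ht. eapply isd_eq; [apply DJ|].
    assert (Ht' : 0 <= t <= T) by lra.
    pose proof (Heq t Ht') as H.
    rewrite E_C, E_A, ndot_N1, n_N0 in H. unfold gradS2 in H.
    rewrite egrad_V in H.
    exact (alg' (Nk n 0 t) (Nk n 1 t) (Nk n 2 t) (Nk n 3 t) (vderive A1 t) _ H (C0 t Ht') (C2 t Ht)). }
  intros s t Hs Ht.
  destruct (MVT_gen (Jz n) s t (fun _ => 0)) as [c [_ Hc]].
  - intros x Hx. apply DJ0.
    unfold Rmin, Rmax in Hx; destruct (Rle_dec s t); lra.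
  - intros x _. apply continuity_pt_filterlim.
    exact (ex_derive_continuous (K:=R_AbsRing) (V:=R_NormedModule) (Jz n) x (ex_intro _ _ (DJ x))).
  - lra.
Qed.
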